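(* Let $\mathcal F$ be a normal TDD representing a tensor $\phi$. Applying a reduction rule (RR1, RR2, RR3 or RR4) to $\mathcal F$ does not change the tensor it represents. Moreover, the reduced TDD of $\phi$ can be obtained from $\mathcal F$ by applying the reduction rules until none is applicable.
   Context: Fix a finite index set $I$ with a linear order $\prec$. Indices take values in $\{0,1\}$; a tensor over $I$ is a map $\{0,1\}^I\to\mathbb{C}$ (tensors over subsets of $I$ are regarded as tensors over $I$ not depending on the other indices). Each index $x$ is regarded as the tensor $x(c)=c$, and $\overline{x}(c):=1-c$; operations on tensors are pointwise. A TDD over $I$ is $\mathcal F=(V,E,index,value,low,high,w)$: a rooted directed acyclic graph with finite node set $V$ partitioned into non-terminal nodes $V_N$ and terminal nodes $V_T$, root $r_{\mathcal F}$; $index:V_N\to I$; $value:V_T\to\mathbb{C}$; $low,high:V_N\to V$ (0- and 1-successors); edges are the low-edges $(v,low(v))$ and high-edges $(v,high(v))$, $v\in V_N$, plus a unique source-less incoming edge $e_r$ of the root; $w$ gives each edge a complex weight and $w_{\mathcal F}:=w(e_r)$. Node tensors: $\Phi(v)=value(v)$ for terminal $v$; otherwise $\Phi(v)=w_0\overline{x_v}\Phi(low(v))+w_1x_v\Phi(high(v))$ with $x_v=index(v)$ and $w_0,w_1$ the low-/high-edge weights. The TDD represents $\Phi(\mathcal F):=w_{\mathcal F}\Phi(r_{\mathcal F})$. Normality (w.r.t. $\prec$): the pivot of a tensor $\phi$ is the lexicographically smallest (compare at the $\prec$-smallest differing index, $0<1$) $\vec a$ with $|\phi(\vec a)|=\max_{\vec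 b}|\phi(\vec b)|$; $\phi$ is normal if $\phi=0$ or $\phi$ equals $1$ at its pivot. A TDD is normal if $\Phi(v)$ is normal for every node $v$. A TDD is reduced if it is normal and (1) $\Phi(v)\neq0$ for every node $v$; (2) all edges of weight $0$ point to the unique terminal node, which has value $1$; (3) $\Phi(u)\neq\Phi(v)$ for any two distinct nodes $u\neq v$. ''The reduced TDD of $\phi$'' means a reduced TDD $\mathcal G$ with $\Phi(\mathcal G)=\phi$ (such TDDs are unique up to isomorphism among $\prec$-ordered ones). Reduction rules. RR1: merge all terminal nodes with value $1$; delete all terminal nodes with value $0$ (if any), redirect their incoming edges to the (unique) terminal node and reset the weights of these edges to $0$. RR2: redirect all weight-$0$ edges to the terminal node; if these include the incoming edge of the root, the terminal node becomes the new root; delete all nodes (and edges involving them) not reachable from the root. RR3: delete a node $v$ if its 0- and 1-successors are identical and its low- and high-edges have the same weight $w$ (either $0$ or $1$), redirecting its incoming edges to the terminal node with value $1$ if $w=0$ and otherwise to its successor. RR4: merge two nodes if they have the same index, the same 0- and 1-successors, and the same weights on the corresponding edges. *)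

(* Defs.v *)
From mathcomp Require Import all_boot all_order all_algebra.
From mathcomp Require Import reals.
From mathcomp.real_closed Require Import complex.

Set Implicit Arguments.
Unset Strict Implicit.
Unset Printing Implicit Defensive.

Import Order.TTheory GRing.Theory Num.Theory.
Local Open Scope ring_scope.

Section TDD.
Variable R : realType.
Local Notation C := (R[i]).
Variables (disp : Order.disp_t) (I : finOrderType disp).

Definition assignment := {ffun I -> bool}.
Definition tensor := assignment -> C.

Definition xvar (x : I) : tensor := fun a => (a x)%:R.
Definition xbar (x : I) : tensor := fun a => 1 - (a x)%:R.

Definition lex_lt (a b : assignment) : Prop :=
  exists i, [/\ a i = false, b i = true & forall j, (j < i)%O -> a j = b j].
Definition lex_le (a b : assignment) : Prop := a = b \/ lex_lt a b.

Definition is_pivot (phi : tensor) (p : assignment) : Prop :=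
  (forall b, `|phi b| <= `|phi p|) /\
  (forall b, `|phi b| = `|phi p| -> lex_le p b).

Definition normal_tensor (phi : tensor) : Prop :=
  (forall a, phi a = 0) \/ (exists p, is_pivot phi p /\ phi p = 1).

(* A node is terminal (with its value) or non-terminal with
   index, 0-successor, low-edge weight, 1-successor, high-edge weight.     *)
Inductive node :=
  | Term of C
  | Inner of I & nat & C & nat & C.

(* nodes: the (finite) node set, given by identifiers;
   root / wroot: target and weight of the source-less root edge e_r;
   lab: the label of each node (junk outside [nodes]).                     *)
Record tdd := TDD {
  nodes : seq nat;
  root : nat;
  wroot : C;
  lab : nat -> node }.

Definition is_term (l : nat -> node) (v : nat) : bool :=
  if l v is Term _ then true else false.

Definition term_val (l : nat -> node) (v : nat) : C :=
  if l v is Term c then c else 0.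

(* The node tensor, computed by structural recursion with fuel; on an
   acyclic graph with [size nodes] nodes this fuel is sufficient.          *)
Fixpoint phi_n (l : nat -> node) (k : nat) (v : nat) : tensor :=
  match k with
  | 0 => fun _ => 0
  | k'.+1 =>
    match l v with
    | Term c => fun _ => c
    | Inner x lo w0 hi w1 =>
        fun a => w0 * xbar x a * phi_n l k' lo a + w1 * xvar x a * phi_n l k' hi a
    end
  end.

Definition node_tensor (F : tdd) (v : nat) : tensor :=
  phi_n (lab F) (size (nodes F)) v.

Definition tensor_of (F : tdd) : tensor :=
  fun a => wroot F * node_tensor F (root F) a.

Definition wf (F : tdd) : Prop :=
  [/\ uniq (nodes F), root F \in nodes F,
      (forall v x lo w0 hi w1, v \in nodes F -> lab F v = Inner x lo w0 hi w1 ->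
          lo \in nodes F /\ hi \in nodes F) &
      exists rk : nat -> nat, forall v x lo w0 hi w1, v \in nodes F ->
          lab F v = Inner x lo w0 hi w1 -> (rk lo < rk v)%N /\ (rk hi < rk v)%N].

Definition ordered (F : tdd) : Prop :=
  forall v x lo w0 hi w1, v \in nodes F -> lab F v = Inner x lo w0 hi w1 ->
    (forall y a b c e, lab F lo = Inner y a b c e -> (x < y)%O) /\
    (forall y a b c e, lab F hi = Inner y a b c e -> (x < y)%O).

Definition normal_tdd (F : tdd) : Prop :=
  forall v, v \in nodes F -> normal_tensor (node_tensor F v).

Definition edge (F : tdd) (u : nat) (w : C) : Prop :=
  (u = root F /\ w = wroot F) \/
  exists v x lo w0 hi w1, [/\ v \in nodes F, lab F v = Inner x lo w0 hi w1 &
                             (u = lo /\ w = w0) \/ (u = hi /\ w = w1)].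

Definition terms (F : tdd) : seq nat := [seq v <- nodes F | is_term (lab F) v].

Definition reduced (F : tdd) : Prop :=
  [/\ normal_tdd F,
      (forall v, v \in nodes F -> node_tensor F v <> (fun _ => 0)),
      (exists t, [/\ terms F = [:: t], lab F t = Term 1 &
                             forall u w, edge F u w -> w = 0 -> u = t]) &
      (forall u v, u \in nodes F -> v \in nodes F -> u <> v ->
                   node_tensor F u <> node_tensor F v)].

Definition map_edges (f : nat -> C -> nat * C) (F : tdd) (ns : seq nat) : tdd :=
  TDD ns (f (root F) (wroot F)).1 (f (root F) (wroot F)).2
    (fun v => match lab F v with
              | Term c => Term c
              | Inner x lo w0 hi w1 =>
                  Inner x (f lo w0).1 (f lo w0).2 (f hi w1).1 (f hi w1).2
              end).

Definition set_lab (F : tdd) (t : nat) (n : node) : tdd :=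
  TDD (nodes F) (root F) (wroot F) (fun v => if v == t then n else lab F v).

(* RR1: merge terminals with value 1, delete terminals with value 0 and
   redirect their incoming edges (weight reset to 0) to the unique terminal
   with value 1 (the first value-1 terminal if any; otherwise a value-0
   terminal is kept and relabelled 1). Applicable iff something changes.   *)
Definition RR1 (F : tdd) (G : tdd) : Prop :=
  let T0 := [seq v <- terms F | term_val (lab F) v == 0] in
  let T1 := [seq v <- terms F | term_val (lab F) v == 1] in
  let t := head (head 0%N T0) T1 in
  (T0 != [::] \/ (1 < size T1)%N) /\
  G = set_lab
        (map_edges (fun u w => if u \in T0 then (t, 0)
                               else if u \in T1 then (t, w) else (u, w))
           F [seq v <- nodes F | (v == t) || (v \notin T0 ++ T1)])
        t (Term 1).

Fixpoint reach_from (l : nat -> node) (k : nat) (v : nat) : seq nat :=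
  v :: match k with
       | 0 => [::]
       | k'.+1 => if l v is Inner _ lo _ hi _
                  then reach_from l k' lo ++ reach_from l k' hi else [::]
       end.

Definition reachable (F : tdd) (v : nat) : bool :=
  v \in reach_from (lab F) (size (nodes F)) (root F).

(* RR2: redirect all weight-0 edges to the (unique) terminal node (this
   includes the root edge), then delete all nodes not reachable from the
   root. Applicable iff something changes. *)
Definition RR2 (F : tdd) (G : tdd) : Prop :=
  exists t, [/\ terms F = [:: t],
    (exists u, edge F u 0 /\ u <> t) \/ (exists v, v \in nodes F /\ ~~ reachable F v) &
    let G' := map_edges (fun u w => if w == 0 then (t, 0) else (u, w)) F (nodes F) in
    G = TDD [seq v <- nodes F | reachable G' v] (root G') (wroot G') (lab G')].

Definition RR3 (F : tdd) (G : tdd) : Prop :=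
  exists v x s w, [/\ v \in nodes F, lab F v = Inner x s w s w &
    (w = 1 /\
       G = map_edges (fun u w' => if u == v then (s, w') else (u, w'))
             F [seq u <- nodes F | u != v]) \/
    (w = 0 /\ exists t, [/\ terms F = [:: t], lab F t = Term 1 &
       G = map_edges (fun u w' => if u == v then (t, 0) else (u, w'))
             F [seq u <- nodes F | u != v]])].

Definition RR4 (F : tdd) (G : tdd) : Prop :=
  exists u v, [/\ u \in nodes F, v \in nodes F, u != v,
    (exists x lo w0 hi w1, lab F u = Inner x lo w0 hi w1 /\ lab F v = Inner x lo w0 hi w1) &
    G = map_edges (fun z w => if z == v then (u, w) else (z, w))
          F [seq z <- nodes F | z != v]].

Definition step (F G : tdd) : Prop := [\/ RR1 F G, RR2 F G, RR3 F G | RR4 F G].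

Inductive steps : tdd -> tdd -> Prop :=
  | steps_refl F : steps F F
  | steps_cons F G H : step F G -> steps G H -> steps F H.

Definition irreducible (F : tdd) : Prop := ~ exists G, step F G.

End TDD.

(* Main.v *)
Require Import Defs.
From mathcomp Require Import all_boot all_order all_algebra.
From mathcomp Require Import reals.
From mathcomp.real_closed Require Import complex.
From Stdlib Require Import Classical FunctionalExtensionality.
From mathcomp Require Import zify ring lra.

Set Implicit Arguments.
Unset Strict Implicit.
Unset Printing Implicit Defensive.
Import Order.TTheory GRing.Theory Num.Theory.
Local Open Scope ring_scope.

Section Dev.
Variable R : realType.
Local Notation C := (R[i]).
Variables (disp : Order.disp_t) (I : finOrderType disp).
Local Notation tdd := (tdd R I).
Local Notation node := (node R I).
Local Notation tensor := (tensor R I).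

Definition closedN (N : seq nat) (l : nat -> node) :=
  forall v x lo w0 hi w1, v \in N -> l v = Inner x lo w0 hi w1 -> lo \in N /\ hi \in N.
Definition ranked (N : seq nat) (l : nat -> node) (rk : nat -> nat) :=
  forall v x lo w0 hi w1, v \in N -> l v = Inner x lo w0 hi w1 -> (rk lo < rk v)%N /\ (rk hi < rk v)%N.

Definition crk (N : seq nat) (rk : nat -> nat) v := count (fun u => rk u < rk v)%N N.

Lemma crk_ranked N l rk : closedN N l -> ranked N l rk -> ranked N l (crk N rk).
Proof.
move=> hc hr v x lo w0 hi w1 vN hl.
have [loN hiN] := hc _ _ _ _ _ _ vN hl.
have [rlo rhi] := hr _ _ _ _ _ _ vN hl.
suff key : forall u, u \in N -> (rk u < rk v)%N -> (crk N rk u < crk N rk v)%N.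
  by split; apply: key.
move=> u uN ruv; rewrite /crk.
have e : count (fun z => rk z < rk v)%N N =
   count (fun z => rk z < rk u)%N N + count (fun z => (rk u <= rk z < rk v))%N N.
  have h := count_predUI (fun z => (rk z < rk u)%N) (fun z => (rk u <= rk z < rk v)%N) N.
  have e0 : count (predI (fun z => (rk z < rk u)%N) (fun z => (rk u <= rk z < rk v)%N)) N = 0%N.
    apply/eqP; rewrite -leqn0 leqNgt -has_count; apply/hasP => -[z _] /=.
    by case/andP => h1 /andP[h2 _]; move: (leq_trans h1 h2); rewrite ltnn.
  rewrite e0 addn0 in h; rewrite -[RHS]h; apply: eq_count => z /=.
  case: (ltnP (rk z) (rk u)) => h' /=.
    by rewrite (ltn_trans h' ruv).
  by [].
rewrite e -[X in (X < _)%N]addn0 ltn_add2l -has_count.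
by apply/hasP; exists u => //=; rewrite leqnn.
Qed.

Lemma crk_lt N rk v : v \in N -> (crk N rk v < size N)%N.
Proof.
move=> vN; rewrite /crk -(count_predC (fun u => (rk u < rk v)%N) N).
rewrite -[X in (X < _)%N]addn0 ltn_add2l -has_count.
by apply/hasP; exists v => //=; rewrite ltnn.
Qed.

Definition sem_eq (l : nat -> node) (P : nat -> tensor) v : tensor :=
  match l v with
  | Term c => fun _ => c
  | Inner x lo w0 hi w1 => fun a => w0 * xbar R x a * P lo a + w1 * xvar R x a * P hi a
  end.

Lemma phi_stab N l rk : closedN N l -> ranked N l rk ->
  forall k v k', v \in N -> (rk v < k)%N -> (rk v < k')%N -> phi_n l k v = phi_n l k' v.
Proof.
move=> hc hr; elim=> [|k IH] v [|k'] vN // hk hk'.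
rewrite /=; case e: (l v) => [c|x lo w0 hi w1] //.
have [loN hiN] := hc _ _ _ _ _ _ vN e.
have [rlo rhi] := hr _ _ _ _ _ _ vN e.
rewrite (IH lo k') ?(IH hi k') //; lia.
Qed.

Definition wfg N l := [/\ uniq N, closedN N l & exists rk, ranked N l rk].

Lemma wfE F : wf F <-> wfg (nodes F) (lab F) /\ Defs.root F \in nodes F.
Proof.
by split; [case=> ? ? ? ?; split=> //; split | case=> -[? ? ?] ?; split].
Qed.

Lemma nt_fix F : wfg (nodes F) (lab F) -> forall v, v \in nodes F ->
  node_tensor F v = sem_eq (lab F) (node_tensor F) v.
Proof.
case=> _ hc [rk hr] v vN.
have hr' := crk_ranked hc hr.
have hlt := crk_lt rk vN.
rewrite /node_tensor /sem_eq.
move: hlt; case e: (size (nodes F)) => [|n] // hlt /=.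
case e2: (lab F v) => [c|x lo w0 hi w1] //.
have [loN hiN] := hc _ _ _ _ _ _ vN e2.
have [rlo rhi] := hr' _ _ _ _ _ _ vN e2.
rewrite (@phi_stab _ _ _ hc hr' n lo n.+1 loN) ?(@phi_stab _ _ _ hc hr' n hi n.+1 hiN) //; lia.
Qed.

Lemma nt_unique F (P : nat -> tensor) : wfg (nodes F) (lab F) ->
  (forall v, v \in nodes F -> P v = sem_eq (lab F) P v) ->
  forall v, v \in nodes F -> node_tensor F v = P v.
Proof.
move=> hw hP; have [_ hc [rk hr]] := hw.
suff : forall n v, (rk v < n)%N -> v \in nodes F -> node_tensor F v = P v.
  by move=> h v; apply: (h (rk v).+1).
elim=> [|n IH] v // hv vN.
rewrite nt_fix // hP // /sem_eq.
case e: (lab F v) => [c|x lo w0 hi w1] //.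
have [loN hiN] := hc _ _ _ _ _ _ vN e.
have [rlo rhi] := hr _ _ _ _ _ _ vN e.
rewrite !IH //; [exact: (leq_trans rhi hv)| exact: (leq_trans rlo hv)].
Qed.


Definition mlab (f : nat -> C -> nat * C) (h : nat -> C -> C) (l : nat -> node) v : node :=
  match l v with
  | Term c => Term I (h v c)
  | Inner x lo w0 hi w1 => Inner x (f lo w0).1 (f lo w0).2 (f hi w1).1 (f hi w1).2
  end.

Lemma GEN F G ns f h (Psi : nat -> tensor) rkG :
 wf F ->
 nodes G = ns -> uniq ns -> {subset ns <= nodes F} ->
 Defs.root G = (f (Defs.root F) (wroot F)).1 -> wroot G = (f (Defs.root F) (wroot F)).2 ->
 (forall v, v \in ns -> lab G v = mlab f h (lab F) v) ->
 (forall v c, v \in ns -> lab F v = Term I c -> Psi v = fun _ => h v c) ->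
 (forall v x lo w0 hi w1, v \in ns -> lab F v = Inner x lo w0 hi w1 -> Psi v = node_tensor F v) ->
 (f (Defs.root F) (wroot F)).1 \in ns ->
 (forall v x lo w0 hi w1, v \in ns -> lab F v = Inner x lo w0 hi w1 ->
     (f lo w0).1 \in ns /\ (f hi w1).1 \in ns) ->
 (forall u w a, u \in nodes F -> (f u w).2 * Psi (f u w).1 a = w * node_tensor F u a) ->
 (forall v x lo w0 hi w1, v \in ns -> lab F v = Inner x lo w0 hi w1 ->
     (rkG (f lo w0).1 < rkG v)%N /\ (rkG (f hi w1).1 < rkG v)%N) ->
 wf G /\ (forall v, v \in ns -> node_tensor G v = Psi v) /\ tensor_of G = tensor_of F.
Proof.
move=> /wfE [hwF rF] eN uns sub eR eW hlab hT hI rN hch hw hrk.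
have [_ hcF _] := hwF.
have hwG : wfg (nodes G) (lab G).
  rewrite eN; split => //.
    move=> v x lo w0 hi w1 vN; rewrite hlab // /mlab.
    case e: (lab F v) => [c|y lo' w0' hi' w1'] //= [_ <- _ <- _].
    exact: (hch _ _ _ _ _ _ vN e).
  exists rkG => v x lo w0 hi w1 vN; rewrite hlab // /mlab.
  case e: (lab F v) => [c|y lo' w0' hi' w1'] //= [_ <- _ <- _].
  exact: (hrk _ _ _ _ _ _ vN e).
have hnt : forall v, v \in ns -> node_tensor G v = Psi v.
  rewrite -eN; apply: nt_unique => // v; rewrite eN => vN.
  rewrite /sem_eq hlab // /mlab.
  case e: (lab F v) => [c|x lo w0 hi w1]; first exact: hT vN e.
  have [loN hiN] := hcF _ _ _ _ _ _ (sub _ vN) e.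
  rewrite (hI _ _ _ _ _ _ vN e) nt_fix ?(sub _ vN) // /sem_eq e.
  apply: functional_extensionality => a.
  rewrite -[_ * _ * Psi _ a]mulrA [xbar _ _ _ * _]mulrC mulrA hw //.
  rewrite -[_ * _ * Psi (f hi w1).1 a]mulrA [xvar _ _ _ * _]mulrC mulrA hw //.
  by rewrite -!mulrA [xbar _ _ _ * _]mulrC [xvar _ _ _ * _]mulrC.
split; first by apply/wfE; split=> //; rewrite eN eR.
split=> //.
apply: functional_extensionality => a.
by rewrite /tensor_of eW eR hnt // hw.
Qed.

Definition above (l : nat -> node) (x : I) z : bool :=
  match l z with Term _ => true | Inner y _ _ _ _ => (x < y)%O end.

Lemma GEN_ord F G ns f h :
 nodes G = ns ->
 (forall v, v \in ns -> lab G v = mlab f h (lab F) v) ->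
 (forall v x lo w0 hi w1, v \in ns -> lab F v = Inner x lo w0 hi w1 ->
     above (lab G) x (f lo w0).1 /\ above (lab G) x (f hi w1).1) ->
 ordered G.
Proof.
move=> eN hlab hab v x lo w0 hi w1; rewrite eN => vN.
rewrite hlab // /mlab.
case e: (lab F v) => [c|y lo' w0' hi' w1'] //= [ey <- _ <- _]; subst y.
have [h1 h2] := hab _ _ _ _ _ _ vN e.
split=> z a b c d el.
  by move: h1; rewrite /above el.
by move: h2; rewrite /above el.
Qed.


Lemma nt_term (F : tdd) v c : wf F -> v \in nodes F -> lab F v = Term I c -> node_tensor F v = fun _ => c.
Proof. by move=> /wfE[hw _] vN e; rewrite nt_fix // /sem_eq e. Qed.

Lemma wf_rank (F : tdd) : wf F -> exists rk, ranked (nodes F) (lab F) rk.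
Proof. by case. Qed.
Lemma wf_g (F : tdd) : wf F -> wfg (nodes F) (lab F).
Proof. by move/wfE=> []. Qed.
Lemma wf_closed (F : tdd) : wf F -> closedN (nodes F) (lab F).
Proof. by case=> ? ? ? ?. Qed.

Lemma size_filter_lt (T : eqType) (p : pred T) (s : seq T) x :
  x \in s -> ~~ p x -> (size (filter p s) < size s)%N.
Proof.
move=> xs px; rewrite size_filter -(count_predC p s) -[X in (X < _)%N]addn0 ltn_add2l.
by rewrite -has_count; apply/hasP; exists x.
Qed.

Lemma above_ord (F : tdd) z x lo w0 hi w1 : ordered F -> z \in nodes F ->
  lab F z = Inner x lo w0 hi w1 -> above (lab F) x lo /\ above (lab F) x hi.
Proof.
move=> ho zN e; have [h1 h2] := ho _ _ _ _ _ _ zN e.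
rewrite /above; split.
  by case e1: (lab F lo) => [//|y a b c d]; apply: h1 e1.
by case e1: (lab F hi) => [//|y a b c d]; apply: h2 e1.
Qed.

Lemma above_mlab f h l x y : above (mlab f h l) x y = above l x y.
Proof. by rewrite /above /mlab; case: (l y). Qed.

Lemma above_trans l x y z : (x < y)%O -> above l y z -> above l x z.
Proof. by rewrite /above; case: (l z) => // y' _ _ _ _; apply: lt_trans. Qed.

Definition RED1_G (F : tdd) v s (k : C -> C) :=
  map_edges (fun u w => if u == v then (s, k w) else (u, w)) F [seq u <- nodes F | u != v].

Lemma RED1 (F : tdd) v s (k : C -> C) : wf F -> ordered F -> v \in nodes F -> s \in nodes F -> s != v ->
 (forall w a, k w * node_tensor F s a = w * node_tensor F v a) ->
 (forall rk, ranked (nodes F) (lab F) rk -> forall x lo w0 hi w1,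
     lab F s = Inner x lo w0 hi w1 -> (rk lo < rk v)%N /\ (rk hi < rk v)%N) ->
 (forall x, above (lab F) x v -> above (lab F) x s) ->
 let G := RED1_G F v s k in
 [/\ wf G, ordered G, (forall z, z \in nodes G -> node_tensor G z = node_tensor F z),
     tensor_of G = tensor_of F & (size (nodes G) < size (nodes F))%N].
Proof.
move=> hwF hoF vN sN sv hk hsr hab G.
set f := (fun u w => if u == v then (s, k w) else (u, w)).
set ns := [seq u <- nodes F | u != v].
have [rk hr] := wf_rank hwF.
have hc := wf_closed hwF.
have tgt : forall u w, u \in nodes F -> (f u w).1 \in ns.
  move=> u w uN; rewrite /f; case: (eqVneq u v) => [_|uv] /=; rewrite mem_filter.
    by rewrite sv.
  by rewrite uv.
pose rkG z := if z == s then minn (rk s) (rk v) else rk z.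
have [hwG [hnt htG]] : wf G /\ (forall z, z \in ns -> node_tensor G z = node_tensor F z) /\
     tensor_of G = tensor_of F.
  apply: (@GEN F G ns f (fun _ c => c) (node_tensor F) rkG) => //.
  - by rewrite filter_uniq //; case: hwF.
  - by move=> z; rewrite mem_filter => /andP[].
  - by move=> z c; rewrite mem_filter => /andP[_ zN] e; apply: nt_term.
  - by apply: tgt; case/wfE: hwF.
  - move=> z x lo w0 hi w1; rewrite mem_filter => /andP[_ zN] e.
    by have [loN hiN] := hc _ _ _ _ _ _ zN e; split; apply: tgt.
  - move=> u w a uN; rewrite /f; case: (eqVneq u v) => [->|uv] //=; exact: hk.
  - move=> z x lo w0 hi w1; rewrite mem_filter => /andP[zv zN] e.
    have [r1 r2] := hr _ _ _ _ _ _ zN e.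
    have key : forall c w', (rk c < rk z)%N -> (z = s -> (rk c < rk v)%N) ->
        (rkG (f c w').1 < rkG z)%N.
      move=> c w' rc hcv; rewrite /rkG /f.
      case: (eqVneq z s) => [zs|zs].
        have cv := hcv zs; subst z.
        have -> : (c == v) = false by apply/negbTE/eqP => ecv; subst c; rewrite ltnn in cv.
        have -> : (c == s) = false by apply/negbTE/eqP => ecs; subst c; rewrite ltnn in rc.
        by rewrite leq_min rc cv.
      case: (eqVneq c v) => [ecv|ecv] /=.
        subst c; rewrite eqxx; apply: (leq_ltn_trans (geq_minr _ _)); exact: rc.
      case: (eqVneq c s) => [ecs|ecs] //=.
      by subst c; apply: (leq_ltn_trans (geq_minl _ _)).
    have hs : z = s -> (rk lo < rk v)%N /\ (rk hi < rk v)%N.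
      by move=> zs; subst z; apply: (hsr rk hr _ _ _ _ _ e).
    split; apply: key => // zs; by case: (hs zs).
split=> //.
- apply: (@GEN_ord F G ns f (fun _ c => c)) => //.
  move=> z x lo w0 hi w1; rewrite mem_filter => /andP[_ zN] e.
  have eG : lab G = mlab f (fun _ c => c) (lab F) by [].
  have [a1 a2] := above_ord hoF zN e.
  rewrite eG !above_mlab /f.
  by split; case: eqP => [ev|_] //=; apply: hab; rewrite -ev.
- by apply: (size_filter_lt vN); rewrite /= eqxx.
Qed.


Definition pres (F G : tdd) :=
  [/\ wf G, ordered G, (forall z, z \in nodes G -> z \in nodes F /\ node_tensor G z = node_tensor F z),
     tensor_of G = tensor_of F & (size (nodes G) < size (nodes F))%N].

Lemma RED1_pres (F : tdd) v s (k : C -> C) : wf F -> ordered F -> v \in nodes F -> s \in nodes F -> s != v ->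
 (forall w a, k w * node_tensor F s a = w * node_tensor F v a) ->
 (forall rk, ranked (nodes F) (lab F) rk -> forall x lo w0 hi w1,
     lab F s = Inner x lo w0 hi w1 -> (rk lo < rk v)%N /\ (rk hi < rk v)%N) ->
 (forall x, above (lab F) x v -> above (lab F) x s) ->
 pres F (RED1_G F v s k).
Proof.
move=> ? ? ? ? ? ? ? ?; have [? ? h ? ?] := @RED1 F v s k ltac:(done) ltac:(done)
   ltac:(done) ltac:(done) ltac:(done) ltac:(done) ltac:(done) ltac:(done).
split=> // z zG; split; last exact: h.
by move: zG; rewrite /RED1_G /= mem_filter => /andP[].
Qed.

Lemma xsum x (a : assignment I) (p : C) : 1 * xbar R x a * p + 1 * xvar R x a * p = p.
Proof. rewrite /xbar /xvar; ring. Qed.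

Lemma RR3_pres (F : tdd) G : wf F -> ordered F -> RR3 F G -> pres F G.
Proof.
move=> hw ho [v [x [s [w [vN e hG]]]]].
have hc := wf_closed hw.
have [rk hr] := wf_rank hw.
have [sN _] := hc _ _ _ _ _ _ vN e.
case: hG => [[w1 ->]|[w0 [t [ht et ->]]]].
  subst w.
  have rs := (hr _ _ _ _ _ _ vN e).1.
  apply: (@RED1_pres F v s (fun w => w)) => //.
  - by apply/eqP => esv; subst s; rewrite ltnn in rs.
  - move=> w a; congr (_ * _); rewrite (nt_fix (wf_g hw) vN) /sem_eq e.
    by rewrite xsum.
  - move=> rk' hr' y lo w0 hi w1 es.
    have [r1 r2] := hr' _ _ _ _ _ _ sN es.
    have r3 := (hr' _ _ _ _ _ _ vN e).1.
    by split; apply: ltn_trans r3.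
  - move=> y; rewrite {1}/above e => yx.
    by apply: (above_trans yx); exact: (above_ord ho vN e).1.
subst w.
have tN : t \in nodes F.
  have : t \in terms F by rewrite ht mem_head.
  by rewrite mem_filter => /andP[].
apply: (@RED1_pres F v t (fun _ => 0)) => //.
- by apply/eqP => etv; subst t; rewrite e in et.
- move=> w a; rewrite mul0r (nt_fix (wf_g hw) vN) /sem_eq e.
  by rewrite !mul0r add0r mulr0.
- by move=> rk' _ y lo w0 hi w1; rewrite et.
- by move=> y _; rewrite /above et.
Qed.

Lemma RR4_pres (F : tdd) G : wf F -> ordered F -> RR4 F G -> pres F G.
Proof.
move=> hw ho [u [v [uN vN uv [x [lo [w0 [hi [w1 [eu ev]]]]]] ->]]].
apply: (@RED1_pres F v u (fun w => w)) => //.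
- move=> w a; congr (_ * _).
  have hw' := (wf_g hw).
  by rewrite (nt_fix hw' vN) (nt_fix hw' uN) /sem_eq eu ev.
- by move=> rk' hr' y lo' w0' hi' w1'; rewrite eu => -[_ <- _ <- _]; apply: (hr' _ _ _ _ _ _ vN ev).
- by move=> y; rewrite /above eu ev.
Qed.


Definition presw (F G : tdd) :=
  [/\ wf G, ordered G, (forall z, z \in nodes G -> z \in nodes F /\
        (node_tensor G z = node_tensor F z \/ node_tensor G z = fun _ => 1)),
     tensor_of G = tensor_of F & (size (nodes G) <= size (nodes F))%N].

Definition rk0 (l : nat -> node) (rk : nat -> nat) z := if is_term l z then 0%N else (rk z).+1.

Lemma rk0_ok (F : tdd) rk (f : nat -> C -> nat * C) (ns : seq nat) :
  ranked (nodes F) (lab F) rk -> (forall u w, (f u w).1 = u \/ is_term (lab F) (f u w).1) ->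
  {subset ns <= nodes F} ->
  forall v x lo w0 hi w1, v \in ns -> lab F v = Inner x lo w0 hi w1 ->
    (rk0 (lab F) rk (f lo w0).1 < rk0 (lab F) rk v)%N /\ (rk0 (lab F) rk (f hi w1).1 < rk0 (lab F) rk v)%N.
Proof.
move=> hr hf sub v x lo w0 hi w1 vN e.
have [r1 r2] := hr _ _ _ _ _ _ (sub _ vN) e.
have hv : rk0 (lab F) rk v = (rk v).+1 by rewrite /rk0 /is_term e.
rewrite hv.
have key : forall c w, (rk c < rk v)%N -> (rk0 (lab F) rk (f c w).1 < (rk v).+1)%N.
  move=> c w rc; case: (hf c w) => [->|ht]; rewrite /rk0.
    by case: (is_term _ _).
  by rewrite ht.
by split; apply: key.
Qed.

Lemma above_term l x y : is_term l y -> above l x y.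
Proof. by rewrite /above /is_term; case: (l y). Qed.

Lemma terms_nodes (F : tdd) t : t \in terms F -> t \in nodes F.
Proof. by rewrite mem_filter => /andP[]. Qed.

Lemma terms_lab (F : tdd) t : t \in terms F -> exists c, lab F t = Term I c.
Proof. by rewrite mem_filter /is_term => /andP[]; case: (lab F t) => // c; exists c. Qed.

Lemma RR1_presw (F : tdd) G : wf F -> ordered F -> RR1 F G -> presw F G.
Proof.
move=> hw ho; rewrite /RR1.
set T0 := [seq v <- terms F | term_val (lab F) v == 0].
set T1 := [seq v <- terms F | term_val (lab F) v == 1].
set t := head (head 0%N T0) T1.
move=> [happ eG].
have T0P : forall u, u \in T0 -> u \in nodes F /\ lab F u = Term I 0.
  move=> u; rewrite mem_filter => /andP[hv ut]; split; first exact: terms_nodes.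
  by have [c ec] := terms_lab ut; move: hv; rewrite /term_val ec => /eqP ->.
have T1P : forall u, u \in T1 -> u \in nodes F /\ lab F u = Term I 1.
  move=> u; rewrite mem_filter => /andP[hv ut]; split; first exact: terms_nodes.
  by have [c ec] := terms_lab ut; move: hv; rewrite /term_val ec => /eqP ->.
have tT : t \in T0 ++ T1.
  rewrite mem_cat /t; move: happ; case eT1: T1 => [|a s] /=; last by rewrite mem_head orbT.
  by case eT0: T0 => [|b s] /=; [case| rewrite mem_head].
have [tN [ct et]] : t \in nodes F /\ exists c, lab F t = Term I c.
  by move: tT; rewrite mem_cat => /orP[/T0P|/T1P] [? ?]; split=> //; eexists; eassumption.
pose f := (fun (u : nat) (w : C) => if u \in T0 then (t, 0) else if u \in T1 then (t, w) else (u, w)).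
pose ns := [seq v <- nodes F | (v == t) || (v \notin T0 ++ T1)].
set f' := map_edges _ _ _ in eG.
have ef : f' = map_edges f F ns by [].
clearbody f'; subst f'.
set h := (fun v (c : C) => if v == t then 1 else c).
set Psi := (fun v => if v == t then (fun _ => 1) else node_tensor F v) : nat -> tensor.
have [rk hr] := wf_rank hw.
have hc := wf_closed hw.
have tgt : forall u w, u \in nodes F -> (f u w).1 \in ns.
  move=> u w uN; rewrite /f mem_filter.
  case: ifP => [_|u0]; first by rewrite eqxx tN.
  case: ifP => [_|u1]; first by rewrite eqxx tN.
  by rewrite /= mem_cat u0 u1 uN orbT.
have hlab : forall v, lab G v = mlab f h (lab F) v.
  move=> v; rewrite eG /= /mlab /h.
  case: (eqVneq v t) => [->|vt]; first by rewrite et.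
  by case: (lab F v).
have [hwG [hnt htG]] : wf G /\ (forall z, z \in ns -> node_tensor G z = Psi z) /\
     tensor_of G = tensor_of F.
  apply: (@GEN F G ns f h Psi (rk0 (lab F) rk)) => //.
  - by rewrite eG.
  - by rewrite filter_uniq //; case: hw.
  - by move=> z; rewrite mem_filter => /andP[].
  - by rewrite eG.
  - by rewrite eG.
  - move=> z c; rewrite mem_filter => /andP[_ zN] e; rewrite /Psi /h.
    by case: eqP => // _; apply: nt_term.
  - move=> z x lo w0 hi w1 _ e; rewrite /Psi; case: eqP => // ezt.
    by rewrite ezt et in e.
  - by apply: tgt; case/wfE: hw.
  - move=> z x lo w0 hi w1; rewrite mem_filter => /andP[_ zN] e.
    by have [loN hiN] := hc _ _ _ _ _ _ zN e; split; apply: tgt.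
  - move=> u w a uN; rewrite /f /Psi.
    case: ifP => [u0|u0] /=.
      by have [_ e0] := T0P _ u0; rewrite (nt_term hw uN e0) !mul0r mulr0.
    case: ifP => [u1|u1] /=.
      by have [_ e1] := T1P _ u1; rewrite eqxx (nt_term hw uN e1).
    case: eqP => // eut; move: tT; rewrite -eut mem_cat u0 u1 //.
  - apply: rk0_ok => //.
      move=> u w; rewrite /f; case: ifP => _; first by right; rewrite /is_term et.
      by case: ifP => _; [right; rewrite /is_term et | left].
    by move=> z; rewrite mem_filter => /andP[].
split=> //.
- apply: (@GEN_ord F G ns f h) => //; first by rewrite eG.
  move=> z x lo w0 hi w1; rewrite mem_filter => /andP[_ zN] e.
  have [a1 a2] := above_ord ho zN e.
  have ab : forall y, above (lab G) x y = (y == t) || above (lab F) x y.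
    move=> y; rewrite eG /above /=; case: eqP => // _.
    by case: (lab F y).
  rewrite !ab /f.
  by split; case: ifP => _; rewrite ?eqxx //; case: ifP => _; rewrite ?eqxx // ?a1 ?a2 orbT.
- move=> z zN; have zns : z \in ns by move: zN; rewrite eG.
  split; first by move: zns; rewrite mem_filter => /andP[].
  rewrite hnt // /Psi; case: eqP => _; by [right|left].
- by rewrite eG /= size_filter count_size.
Qed.


Lemma reach_head (l : nat -> node) k v : v \in reach_from l k v.
Proof. by case: k => [|k] /=; rewrite mem_head. Qed.

Lemma reach_child N (l : nat -> node) rk : closedN N l -> ranked N l rk ->
  forall k v, v \in N -> (rk v <= k)%N -> forall z, z \in reach_from l k v ->
  forall x lo w0 hi w1, l z = Inner x lo w0 hi w1 ->
     lo \in reach_from l k v /\ hi \in reach_from l k v.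
Proof.
move=> hc hr; elim=> [|k IH] v vN hv z.
  rewrite /= inE => /eqP -> x lo w0 hi w1 e.
  by have [r1 _] := hr _ _ _ _ _ _ vN e; move: r1 hv; case: (rk v).
rewrite /= inE => /orP[/eqP ->|].
  move=> x lo w0 hi w1 e; rewrite e !inE !mem_cat !reach_head.
  by split; rewrite ?orbT.
case e: (l v) => [//|y lo w0 hi w1].
have [loN hiN] := hc _ _ _ _ _ _ vN e.
have [r1 r2] := hr _ _ _ _ _ _ vN e.
rewrite mem_cat => /orP[zr|zr] x' lo' w0' hi' w1' e'.
  have [h1 h2] := IH lo loN ltac:(lia) z zr _ _ _ _ _ e'.
  by rewrite !inE !mem_cat h1 h2 !orbT.
have [h1 h2] := IH hi hiN ltac:(lia) z zr _ _ _ _ _ e'.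
by rewrite !inE !mem_cat h1 h2 !orbT.
Qed.

Lemma RR2_presw (F : tdd) G : wf F -> ordered F -> RR2 F G -> presw F G.
Proof.
move=> hw ho [t [ht _ eG]].
have tN : t \in nodes F by apply: terms_nodes; rewrite ht mem_head.
have [ct et] : exists c, lab F t = Term I c by apply: terms_lab; rewrite ht mem_head.
pose f := (fun (u : nat) (w : C) => if w == 0 then (t, 0) else (u, w)).
set G' := map_edges _ F (nodes F) in eG.
have eG' : G' = map_edges f F (nodes F) by [].
clearbody G'; subst G'.
pose ns := [seq v <- nodes F | reachable (map_edges f F (nodes F)) v].
have [rk hr] := wf_rank hw.
have hc := wf_closed hw.
have [uF _ _] := wf_g hw.
have rF : Defs.root F \in nodes F by case/wfE: hw.
have tgtN : forall u w, u \in nodes F -> (f u w).1 \in nodes F.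
  by move=> u w uN; rewrite /f; case: eqP.
have hf : forall u w, (f u w).1 = u \/ is_term (lab F) (f u w).1.
  by move=> u w; rewrite /f; case: eqP => _; [right; rewrite /= /is_term et | left].
pose G' := map_edges f F (nodes F).
have hcG' : closedN (nodes F) (lab G').
  move=> v x lo w0 hi w1 vN; rewrite /G' /=.
  case e: (lab F v) => [//|y lo' w0' hi' w1'] [_ <- _ <- _].
  by have [loN hiN] := hc _ _ _ _ _ _ vN e; split; apply: tgtN.
have hrG' : ranked (nodes F) (lab G') (rk0 (lab F) rk).
  move=> v x lo w0 hi w1 vN; rewrite /G' /=.
  case e: (lab F v) => [//|y lo' w0' hi' w1'] [_ <- _ <- _].
  exact: (rk0_ok hr hf (fun z (h : z \in nodes F) => h) vN e).
have hrc := crk_ranked hcG' hrG'.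
have rG' : Defs.root G' \in nodes F by apply: tgtN.
have reachN : forall z x lo w0 hi w1, reachable G' z -> lab G' z = Inner x lo w0 hi w1 ->
    reachable G' lo /\ reachable G' hi.
  move=> z x lo w0 hi w1 zr e; rewrite /reachable.
  have hk : (crk (nodes F) (rk0 (lab F) rk) (Defs.root G') <= size (nodes F))%N.
    by have := crk_lt (rk0 (lab F) rk) rG'; apply: ltnW.
  exact: (@reach_child (nodes F) (lab G') _ hcG' hrc (size (nodes F)) (Defs.root G') rG' hk z zr _ _ _ _ _ e).
have [hwG [hnt htG]] : wf G /\ (forall z, z \in ns -> node_tensor G z = node_tensor F z) /\
     tensor_of G = tensor_of F.
  apply: (@GEN F G ns f (fun _ c => c) (node_tensor F) (rk0 (lab F) rk)) => //.
  - by rewrite eG.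
  - by rewrite filter_uniq.
  - by move=> z; rewrite mem_filter => /andP[].
  - by rewrite eG.
  - by rewrite eG.
  - by move=> v vN; rewrite eG.
  - by move=> z c; rewrite mem_filter => /andP[_ zN] e; apply: nt_term.
  - by rewrite mem_filter rG' andbT; apply: reach_head.
  - move=> z x lo w0 hi w1; rewrite mem_filter => /andP[zr zN] e.
    have e' : lab G' z = Inner x (f lo w0).1 (f lo w0).2 (f hi w1).1 (f hi w1).2.
      by rewrite /G' /= e.
    have [loN hiN] := hc _ _ _ _ _ _ zN e.
    have [h1 h2] := reachN _ _ _ _ _ _ zr e'.
    by rewrite !mem_filter h1 h2 !tgtN.
  - move=> u w a uN; rewrite /f; case: eqP => [->|_] //=.
    by rewrite !mul0r.
  - apply: rk0_ok => //.
    by move=> z; rewrite mem_filter => /andP[].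
split=> //.
- apply: (@GEN_ord F G ns f (fun _ c => c)) => //; first by rewrite eG.
    by move=> v vN; rewrite eG.
  move=> z x lo w0 hi w1; rewrite mem_filter => /andP[_ zN] e.
  have [a1 a2] := above_ord ho zN e.
  rewrite eG /= !(above_mlab f (fun _ c => c)) /f.
  by split; case: eqP => _ //=; apply: above_term; rewrite /is_term et.
- move=> z zN; have zns : z \in ns by move: zN; rewrite eG.
  split; first by move: zns; rewrite mem_filter => /andP[].
  by left; apply: hnt.
- by rewrite eG /= size_filter count_size.
Qed.


Local Notation assignment := (assignment I).

Lemma lex_lt_asym (p q : assignment) : lex_lt p q -> lex_lt q p -> False.
Proof.
move=> [i [pi qi hi]] [j [qj pj hj]].
case: (ltgtP i j) => [ij|ji|eij].
- by move: (hj _ ij); rewrite pi qi.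
- by move: (hi _ ji); rewrite pj qj.
- by subst j; rewrite pi in pj.
Qed.

Lemma lex_antisym (p q : assignment) : lex_le p q -> lex_le q p -> p = q.
Proof.
case=> [//|h1]; case=> [//|h2]; exfalso; exact: lex_lt_asym h1 h2.
Qed.

Definition a0 : assignment := [ffun _ => false].

Lemma normal_const1 : normal_tensor (fun _ : assignment => (1 : C)).
Proof.
right; exists a0; split=> //; split=> // b _.
case: (eqVneq a0 b) => [->|nb]; first by left.
right.
have [i bi] : exists i, b i.
  apply/existsP; apply: contraR nb => /existsPn hn.
  by apply/eqP/ffunP => j; rewrite ffunE; move: (hn j); case: (b j).
case: (@arg_minP _ _ I i (fun j => b j) id bi) => j bj hmin.
exists j; split=> //; first by rewrite ffunE.
move=> k kj; rewrite ffunE; case bk: (b k) => //.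
by move: (hmin k bk); rewrite leNgt kj.
Qed.

Lemma normal_const (c : C) : normal_tensor (fun _ : assignment => c) -> c = 0 \/ c = 1.
Proof.
by case=> [h|[p [_ h]]]; [left; apply: (h a0) | right].
Qed.

Lemma scaling (phi psi : tensor) (c d : C) :
  normal_tensor phi -> normal_tensor psi ->
  (exists b, phi b != 0) -> (exists b, psi b != 0) -> c != 0 ->
  (forall b, c * phi b = d * psi b) -> c = d /\ forall b, phi b = psi b.
Proof.
move=> nphi npsi [b1 hb1] [b2 hb2] c0 e.
case: nphi => [h|[p [[pmax pmin] p1]]]; first by rewrite h eqxx in hb1.
case: npsi => [h|[q [[qmax qmin] q1]]]; first by rewrite h eqxx in hb2.
have d0 : d != 0.
  apply/eqP => d0; move: (e b1); rewrite d0 mul0r => /eqP; rewrite mulf_eq0.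
  by rewrite (negbTE c0) (negbTE hb1).
have en : forall b, `|c| * `|phi b| = `|d| * `|psi b| by move=> b; rewrite -!normrM e.
have nc : 0 < `|c| by rewrite normr_gt0.
have nd : 0 < `|d| by rewrite normr_gt0.
have h1 : `|psi q| <= `|psi p|.
  rewrite -(ler_pM2l nd) -!en ler_pM2l //.
have h2 : `|psi p| = `|psi q| by apply/le_anti; rewrite qmax h1.
have h3 : `|phi q| = `|phi p|.
  by apply: (mulfI (lt0r_neq0 nc)); rewrite !en h2.
have epq : p = q by apply: lex_antisym; [apply: pmin | apply: qmin].
subst q.
have cd : c = d by move: (e p); rewrite p1 q1 !mulr1.
split=> // b; apply: (mulfI c0); rewrite e cd //.
Qed.


Lemma pres_presw (F G : tdd) : pres F G -> presw F G.
Proof.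
case=> ? ? h ? ?; split=> //; last exact: ltnW.
by move=> z zG; have [? ?] := h z zG; split=> //; left.
Qed.

Lemma step_presw (F G : tdd) : wf F -> ordered F -> step F G -> presw F G.
Proof.
move=> hw ho; case=> h.
- exact: RR1_presw.
- exact: RR2_presw.
- by apply: pres_presw; apply: RR3_pres.
- by apply: pres_presw; apply: RR4_pres.
Qed.

Definition Inv (F : tdd) := [/\ wf F, ordered F & normal_tdd F].

Lemma step_inv (F G : tdd) : Inv F -> step F G -> Inv G /\ tensor_of G = tensor_of F.
Proof.
case=> hw ho hn hs; have [hwG hoG hz ht _] := step_presw hw ho hs.
split=> //; split=> // z zG.
have [zF [->|->]] := hz z zG; [exact: hn | exact: normal_const1].
Qed.

Lemma steps_inv (F G : tdd) : Inv F -> steps F G -> Inv G /\ tensor_of G = tensor_of F.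
Proof.
move=> hF hs; elim: hs hF => [F' h|F' G' H' hs _ IH h]; first by split.
have [h1 e1] := step_inv h hs.
by have [h2 e2] := IH h1; split=> //; rewrite e2.
Qed.


Definition indep (phi : tensor) (x : I) :=
  forall a b : assignment, (forall j, j != x -> a j = b j) -> phi a = phi b.

Definition setx (b : assignment) (x : I) (c : bool) : assignment :=
  [ffun j => if j == x then c else b j].

Lemma nt_indep (G : tdd) : wf G -> ordered G -> forall v, v \in nodes G ->
  forall x, above (lab G) x v -> indep (node_tensor G v) x.
Proof.
move=> hw ho; have [rk hr] := wf_rank hw; have hc := wf_closed hw.
suff : forall n v, (rk v < n)%N -> v \in nodes G ->
  forall x, above (lab G) x v -> indep (node_tensor G v) x.
  by move=> h v; apply: (h (rk v).+1).
elim=> [|n IH] v // hv vN x ab a b hab.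
rewrite (nt_fix (wf_g hw) vN) /sem_eq.
case e: (lab G v) => [c|y lo w0 hi w1] //.
have [loN hiN] := hc _ _ _ _ _ _ vN e.
have [r1 r2] := hr _ _ _ _ _ _ vN e.
have [a1 a2] := above_ord ho vN e.
move: ab; rewrite /above e => xy.
have ey : a y = b y by apply: hab; rewrite eq_sym (lt_eqF xy).
rewrite /xbar /xvar ey (IH lo _ loN x _ a b hab) ?(IH hi _ hiN x _ a b hab) //.
- exact: (leq_trans r2 hv).
- exact: above_trans xy a2.
- exact: (leq_trans r1 hv).
- exact: above_trans xy a1.
Qed.

Lemma nt_eval (G : tdd) v x lo w0 hi w1 : wf G -> ordered G -> v \in nodes G ->
  lab G v = Inner x lo w0 hi w1 ->
  forall b, node_tensor G v (setx b x false) = w0 * node_tensor G lo b /\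
            node_tensor G v (setx b x true) = w1 * node_tensor G hi b.
Proof.
move=> hw ho vN e b.
have [loN hiN] := wf_closed hw vN e.
have [a1 a2] := above_ord ho vN e.
have hs : forall c, forall j, j != x -> setx b x c j = b j.
  by move=> c j jx; rewrite ffunE (negbTE jx).
rewrite !(nt_fix (wf_g hw) vN) /sem_eq e /xbar /xvar !ffunE eqxx /=.
rewrite (nt_indep hw ho loN a1 (hs false)) (nt_indep hw ho hiN a2 (hs false)).
rewrite (nt_indep hw ho loN a1 (hs true)) (nt_indep hw ho hiN a2 (hs true)).
by split; ring.
Qed.


Section Irr.
Variable G : tdd.
Hypotheses (hw : wf G) (ho : ordered G) (hn : normal_tdd G) (hirr : irreducible G).

Lemma irr_term_val v c : v \in nodes G -> lab G v = Term I c -> c = 0 \/ c = 1.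
Proof. by move=> vN e; apply: normal_const; rewrite -(nt_term hw vN e); apply: hn. Qed.

Lemma exists_term : exists z, z \in terms G.
Proof.
have [rk hr] := wf_rank hw; have hc := wf_closed hw.
have rN : Defs.root G \in nodes G by case/wfE: hw.
suff : forall n v, (rk v < n)%N -> v \in nodes G -> exists z, z \in terms G.
  by move=> h; apply: (h _ _ (ltnSn _) rN).
elim=> [|n IH] v // hv vN.
case e: (lab G v) => [c|x lo w0 hi w1].
  by exists v; rewrite mem_filter /is_term e vN.
have [loN _] := hc _ _ _ _ _ _ vN e.
have [r1 _] := hr _ _ _ _ _ _ vN e.
exact: (IH lo (leq_trans r1 hv) loN).
Qed.

Lemma irr_terms : exists t, terms G = [:: t] /\ lab G t = Term I 1.
Proof.
set T0 := [seq v <- terms G | term_val (lab G) v == 0].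
set T1 := [seq v <- terms G | term_val (lab G) v == 1].
have H : ~ (T0 != [::] \/ (1 < size T1)%N).
  by move=> h; apply: hirr; eexists; apply: Or41; split; [exact: h | reflexivity].
have T0e : T0 = [::] by case: (eqVneq T0 [::]) => // h; case: H; left.
have T1s : (size T1 <= 1)%N by rewrite leqNgt; apply/negP => h; case: H; right.
have hall : all (fun v => term_val (lab G) v == 1) (terms G).
  apply/allP => z zt; have [c e] := terms_lab zt.
  have [c0|c1] := irr_term_val (terms_nodes zt) e.
    have : z \in T0 by rewrite mem_filter /term_val e c0 eqxx zt.
    by rewrite T0e.
  by rewrite /term_val e c1.
have eT : T1 = terms G by apply/all_filterP.
have [z zt] := exists_term.
move: T1s zt hall; rewrite eT; case: (terms G) => [|t [|t' s]] //= _.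
move=> _ /andP[h _]; exists t; split=> //.
have [c e] : exists c, lab G t = Term I c.
  by move: h; rewrite /term_val; case: (lab G t) => [c _|? ? ? ? ? /eqP h]; [exists c | move: (@oner_neq0 C); rewrite h eqxx].
by move: h; rewrite /term_val e => /eqP ->.
Qed.

Variable t : nat.
Hypotheses (ht : terms G = [:: t]) (et : lab G t = Term I 1).

Lemma tN : t \in nodes G.
Proof. by apply: terms_nodes; rewrite ht mem_head. Qed.

Lemma term_is_t v c : v \in nodes G -> lab G v = Term I c -> v = t.
Proof.
move=> vN e; have : v \in terms G by rewrite mem_filter /is_term e vN.
by rewrite ht inE => /eqP.
Qed.

Lemma irr_edge0 u w : edge G u w -> w = 0 -> u = t.
Proof.
move=> he w0; subst w; case: (eqVneq u t) => // ut; exfalso; apply: hirr.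
eexists; apply: Or42; exists t; split; [exact: ht | left; exists u; split=> //; exact/eqP | reflexivity].
Qed.

Lemma irr_lo v x lo w0 hi w1 : v \in nodes G -> lab G v = Inner x lo w0 hi w1 -> w0 = 0 -> lo = t.
Proof.
move=> vN e w00; apply: (irr_edge0 (w := w0)) => //; right.
by exists v, x, lo, w0, hi, w1; split=> //; left.
Qed.

Lemma irr_hi v x lo w0 hi w1 : v \in nodes G -> lab G v = Inner x lo w0 hi w1 -> w1 = 0 -> hi = t.
Proof.
move=> vN e w10; apply: (irr_edge0 (w := w1)) => //; right.
by exists v, x, lo, w0, hi, w1; split=> //; right.
Qed.

Lemma no3a v x s : v \in nodes G -> lab G v = Inner x s 1 s 1 -> False.
Proof.
move=> vN e; apply: hirr; eexists; apply: Or43; exists v, x, s, 1; split=> //.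
by left; split; [done | reflexivity].
Qed.

Lemma no3b v x : v \in nodes G -> lab G v = Inner x t 0 t 0 -> False.
Proof.
move=> vN e; apply: hirr; eexists; apply: Or43; exists v, x, t, 0; split=> //.
by right; split=> //; exists t; split; [done | done | reflexivity].
Qed.

Lemma no4 u v x lo w0 hi w1 : u \in nodes G -> v \in nodes G -> u != v ->
  lab G u = Inner x lo w0 hi w1 -> lab G v = Inner x lo w0 hi w1 -> False.
Proof.
move=> uN vN uv eu ev; apply: hirr; eexists; apply: Or44; exists u, v; split=> //.
  by exists x, lo, w0, hi, w1.
Qed.

Lemma irr_nz v : v \in nodes G -> exists b, node_tensor G v b != 0.
Proof.
have [rk hr] := wf_rank hw; have hc := wf_closed hw.
suff : forall n v, (rk v < n)%N -> v \in nodes G -> exists b, node_tensor G v b != 0.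
  by move=> h vN; apply: (h _ _ (ltnSn _) vN).
elim=> [|n IH] {}v // hv vN.
case e: (lab G v) => [c|x lo w0 hi w1].
  have vt := term_is_t vN e; subst v.
  by exists a0; rewrite (nt_term hw vN et) oner_neq0.
case: (classic (exists b, node_tensor G v b != 0)) => // hne.
have hz : forall b, node_tensor G v b = 0.
  by move=> b; apply/eqP; apply/negP => h; apply: hne; exists b; exact/negP.
have [loN hiN] := hc _ _ _ _ _ _ vN e.
have [r1 r2] := hr _ _ _ _ _ _ vN e.
have [b1 hb1] := IH lo (leq_trans r1 hv) loN.
have [b2 hb2] := IH hi (leq_trans r2 hv) hiN.
have [e1 _] := nt_eval hw ho vN e b1.
have [_ e2] := nt_eval hw ho vN e b2.
rewrite hz in e1; rewrite hz in e2.
have w00 : w0 = 0.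
  by move/esym/eqP: e1; rewrite mulf_eq0 (negbTE hb1) orbF => /eqP.
have w10 : w1 = 0.
  by move/esym/eqP: e2; rewrite mulf_eq0 (negbTE hb2) orbF => /eqP.
have lt := irr_lo vN e w00; have hit := irr_hi vN e w10.
subst lo hi w0 w1; exfalso; exact: no3b vN e.
Qed.

Lemma helper u x lo w0 hi w1 : u \in nodes G -> lab G u = Inner x lo w0 hi w1 ->
  indep (node_tensor G u) x -> ((forall a, node_tensor G lo a = node_tensor G hi a) -> lo = hi) ->
  False.
Proof.
move=> uN e hind IH.
have [loN hiN] := wf_closed hw uN e.
have E : forall b, w0 * node_tensor G lo b = w1 * node_tensor G hi b.
  move=> b; have [e1 e2] := nt_eval hw ho uN e b.
  rewrite -e1 -e2; apply: hind => j jx; by rewrite !ffunE (negbTE jx).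
case: (eqVneq w0 0) => [w00|w0n].
  have w10 : w1 = 0.
    have [b hb] := irr_nz hiN.
    by move: (E b); rewrite w00 mul0r => /esym/eqP; rewrite mulf_eq0 (negbTE hb) orbF => /eqP.
  have lt := irr_lo uN e w00; have hit := irr_hi uN e w10.
  subst lo hi w0 w1; exact: no3b uN e.
have [ew enl] := scaling (hn loN) (hn hiN) (irr_nz loN) (irr_nz hiN) w0n E.
have elh := IH enl; subst w1 hi.
have Eu : forall b, w0 * node_tensor G lo b = 1 * node_tensor G u b.
  move=> b; rewrite mul1r (nt_fix (wf_g hw) uN) /sem_eq e /xbar /xvar; ring.
have [w01 _] := scaling (hn loN) (hn uN) (irr_nz loN) (irr_nz uN) w0n Eu.
subst w0; exact: no3a uN e.
Qed.

Lemma slot lo w0 lo' w0' : lo \in nodes G -> lo' \in nodes G ->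
  (w0 = 0 -> lo = t) -> (w0' = 0 -> lo' = t) ->
  (forall b, w0 * node_tensor G lo b = w0' * node_tensor G lo' b) ->
  ((forall a, node_tensor G lo a = node_tensor G lo' a) -> lo = lo') ->
  lo = lo' /\ w0 = w0'.
Proof.
move=> loN lo'N h00 h0 E IH.
case: (eqVneq w0 0) => [w00|w0n].
  have w10 : w0' = 0.
    have [b hb] := irr_nz lo'N.
    by move: (E b); rewrite w00 mul0r => /esym/eqP; rewrite mulf_eq0 (negbTE hb) orbF => /eqP.
  by rewrite h00 // h0 // w00 w10.
have [ew enl] := scaling (hn loN) (hn lo'N) (irr_nz loN) (irr_nz lo'N) w0n E.
by split=> //; apply: IH.
Qed.

Lemma const_indep (phi : tensor) c x : (forall a, phi a = c) -> indep phi x.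
Proof. by move=> h a b _; rewrite !h. Qed.

Lemma irr_distinct u v : u \in nodes G -> v \in nodes G ->
  (forall a, node_tensor G u a = node_tensor G v a) -> u = v.
Proof.
have [rk hr] := wf_rank hw; have hc := wf_closed hw.
pose rz := rk0 (lab G) rk.
have hrz : ranked (nodes G) (lab G) rz.
  move=> z x lo w0 hi w1 zN e.
  exact: (@rk0_ok G rk (fun u w => (u, w)) (nodes G) hr (fun _ _ => or_introl erefl)
            (fun _ h => h) _ _ _ _ _ _ zN e).
suff : forall n u v, (rz u < n)%N -> (rz v < n)%N -> u \in nodes G -> v \in nodes G ->
  (forall a, node_tensor G u a = node_tensor G v a) -> u = v.
  by move=> h uN vN; apply: (h (maxn (rz u) (rz v)).+1) => //; rewrite ltnS ?leq_maxl ?leq_maxr.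
elim=> [|n IH] {}u {}v // hu hv uN vN E.
case eu: (lab G u) => [cu|x lo w0 hi w1]; case ev: (lab G v) => [cv|y lo' w0' hi' w1'].
- by rewrite (term_is_t uN eu) (term_is_t vN ev).
- exfalso; have [r1 r2] := hrz _ _ _ _ _ _ vN ev.
  have [loN hiN] := hc _ _ _ _ _ _ vN ev.
  apply: (helper vN ev).
    apply: (@const_indep _ cu) => a; rewrite -E (nt_term hw uN eu) //.
  by apply: IH => //; lia.
- exfalso; have [r1 r2] := hrz _ _ _ _ _ _ uN eu.
  have [loN hiN] := hc _ _ _ _ _ _ uN eu.
  apply: (helper uN eu).
    apply: (@const_indep _ cv) => a; rewrite E (nt_term hw vN ev) //.
  by apply: IH => //; lia.
have [r1 r2] := hrz _ _ _ _ _ _ uN eu.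
have [loN hiN] := hc _ _ _ _ _ _ uN eu.
have [r1' r2'] := hrz _ _ _ _ _ _ vN ev.
have [loN' hiN'] := hc _ _ _ _ _ _ vN ev.
case: (ltgtP x y) => [xy|yx|exy].
- exfalso; apply: (helper uN eu).
    move=> a b hab; rewrite !E; apply: (@nt_indep G hw ho v vN x) => //.
    by rewrite /above ev.
  by apply: IH => //; lia.
- exfalso; apply: (helper vN ev).
    move=> a b hab; rewrite -!E; apply: (@nt_indep G hw ho u uN y) => //.
    by rewrite /above eu.
  by apply: IH => //; lia.
subst y.
have [s1 s2] : lo = lo' /\ w0 = w0'.
  apply: slot => //; [exact: irr_lo uN eu | exact: irr_lo vN ev | | ].
    move=> b; have [e1 _] := nt_eval hw ho uN eu b; have [e1' _] := nt_eval hw ho vN ev b.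
    by rewrite -e1 -e1' E.
  by apply: IH => //; lia.
have [s3 s4] : hi = hi' /\ w1 = w1'.
  apply: slot => //; [exact: irr_hi uN eu | exact: irr_hi vN ev | | ].
    move=> b; have [_ e1] := nt_eval hw ho uN eu b; have [_ e1'] := nt_eval hw ho vN ev b.
    by rewrite -e1 -e1' E.
  by apply: IH => //; lia.
subst lo' w0' hi' w1'.
case: (eqVneq u v) => // uv; exfalso; exact: (no4 uN vN uv eu ev).
Qed.

Lemma irr_reduced_t : reduced G.
Proof.
split=> //.
- move=> v vN h; have [b hb] := irr_nz vN.
  by move: hb; rewrite h eqxx.
- exists t; split=> //; exact: irr_edge0.
- move=> u v uN vN uv h; apply: uv; apply: irr_distinct => // a; by rewrite h.
Qed.

End Irr.

Lemma irr_reduced (G : tdd) : Inv G -> irreducible G -> reduced G.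
Proof.
case=> hw ho hn hirr.
have [t [ht et]] := irr_terms hw hn hirr.
exact: (irr_reduced_t hw ho hn hirr ht et).
Qed.


Definition T0 (F : tdd) := [seq v <- terms F | term_val (lab F) v == 0].
Definition bad (F : tdd) := exists u, edge F u 0 /\ ~~ is_term (lab F) u.

Lemma edge_map (F G : tdd) f h u w :
  {subset nodes G <= nodes F} ->
  (Defs.root G, wroot G) = f (Defs.root F) (wroot F) ->
  (forall v, v \in nodes G -> lab G v = mlab f h (lab F) v) ->
  edge G u w -> (u, w) = f (Defs.root F) (wroot F) \/
    exists p x lo w0 hi w1, [/\ p \in nodes F, lab F p = Inner x lo w0 hi w1 &
       (u, w) = f lo w0 \/ (u, w) = f hi w1].
Proof.
move=> sub er hl [[-> ->]|[p [x [lo [w0 [hi [w1 [pN e hh]]]]]]]]; first by left.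
right; move: e; rewrite hl // /mlab.
case e: (lab F p) => [//|y lo' w0' hi' w1'] [ey elo ew0 ehi ew1].
exists p, y, lo', w0', hi', w1'; split=> //; first exact: sub.
case: hh => [[-> ->]|[-> ->]]; [left|right]; rewrite -?elo -?ew0 -?ehi -?ew1; by case: (f _ _).
Qed.

Lemma is_term_mlab f h l v : is_term (mlab f h l) v = is_term l v.
Proof. by rewrite /is_term /mlab; case: (l v). Qed.

Lemma filter_eq_all (T : eqType) (p : pred T) (s : seq T) :
  size (filter p s) = size s -> forall x, x \in s -> p x.
Proof.
move=> e x xs; apply/negPn/negP => hp; have := size_filter_lt xs hp.
by rewrite e ltnn.
Qed.

Lemma reach_cong N (l l' : nat -> node) : closedN N l -> (forall z, z \in N -> l z = l' z) ->
  forall k v, v \in N -> reach_from l k v = reach_from l' k v.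
Proof.
move=> hc hag; elim=> [|k IH] v vN //=.
rewrite -(hag v vN); case e: (l v) => [//|x lo w0 hi w1].
have [loN hiN] := hc _ _ _ _ _ _ vN e.
by rewrite !IH.
Qed.


Lemma seq_nil_nomem (s : seq nat) : (forall z, z \in s -> False) -> s = [::].
Proof. by case: s => // a s h; case: (h a); rewrite mem_head. Qed.

Lemma RR1_term (F G : tdd) : wf F -> RR1 F G ->
  (bad G -> bad F) /\ (size (nodes G) = size (nodes F) -> T0 F != [::] /\ T0 G = [::]).
Proof.
move=> hw; rewrite /RR1.
set T0' := [seq v <- terms F | term_val (lab F) v == 0].
set T1 := [seq v <- terms F | term_val (lab F) v == 1].
set t := head (head 0%N T0') T1.
move=> [happ eG].
have T0P : forall u, u \in T0' -> u \in nodes F /\ lab F u = Term I 0.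
  move=> u; rewrite mem_filter => /andP[hv ut]; split; first exact: terms_nodes.
  by have [c ec] := terms_lab ut; move: hv; rewrite /term_val ec => /eqP ->.
have T1P : forall u, u \in T1 -> u \in nodes F /\ lab F u = Term I 1.
  move=> u; rewrite mem_filter => /andP[hv ut]; split; first exact: terms_nodes.
  by have [c ec] := terms_lab ut; move: hv; rewrite /term_val ec => /eqP ->.
have tT : t \in T0' ++ T1.
  rewrite mem_cat /t; move: happ; case eT1: T1 => [|a s] /=; last by rewrite mem_head orbT.
  by case eT0: T0' => [|b s] /=; [case| rewrite mem_head].
have [tN [ct et]] : t \in nodes F /\ exists c, lab F t = Term I c.
  by move: tT; rewrite mem_cat => /orP[/T0P|/T1P] [? ?]; split=> //; eexists; eassumption.
pose f := (fun (u : nat) (w : C) => if u \in T0' then (t, 0) else if u \in T1 then (t, w) else (u, w)).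
pose ns := [seq v <- nodes F | (v == t) || (v \notin T0' ++ T1)].
set f' := map_edges _ _ _ in eG.
have ef : f' = map_edges f F ns by [].
clearbody f'; subst f'.
set h := (fun v (c : C) => if v == t then 1 else c).
have hlab : forall v, lab G v = mlab f h (lab F) v.
  move=> v; rewrite eG /= /mlab /h.
  case: (eqVneq v t) => [->|vt]; first by rewrite et.
  by case: (lab F v).
have sub : {subset nodes G <= nodes F}.
  by move=> z; rewrite eG /= mem_filter => /andP[].
have tterm : is_term (lab F) t by rewrite /is_term et.
split.
  move=> [u [he nt]].
  have ntF : ~~ is_term (lab F) u.
    by move: nt; rewrite /is_term hlab /mlab; case: (lab F u).
  have fc : forall u' w', (u, 0) = f u' w' -> u' = u /\ w' = 0.
    move=> u' w'; rewrite /f; case: ifP => _; first by case=> eu; move: ntF; rewrite eu tterm.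
    case: ifP => _; first by case=> eu; move: ntF; rewrite eu tterm.
    by case=> -> ->.
  exists u; split=> //.
  case: (edge_map sub _ (fun v _ => hlab v) he) => [|er|[p [x [lo [w0 [hi [w1 [pN e hh]]]]]]]].
  - by rewrite eG /=; case: (f _ _).
  - by have [<- <-] := fc _ _ er; left.
  - right; exists p, x, lo, w0, hi, w1; split=> //.
    by case: hh => hh; have [-> ->] := fc _ _ hh; [left | right].
move=> es.
have hall : forall z, z \in nodes F -> (z == t) || (z \notin T0' ++ T1).
  by apply: filter_eq_all; move: es; rewrite eG.
have T0n : T0' != [::].
  case: happ => // h1; exfalso.
  have uT1 : uniq T1 by rewrite !filter_uniq //; case: hw.
  move: h1 uT1 (fun z => T1P z); case eT: T1 => [|a [|b s]] //= _.
  rewrite inE => /andP[/negP hab _] hP; apply: hab.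
  have [aN _] := hP a (mem_head _ _).
  have [bN _] : b \in nodes F /\ lab F b = Term I 1 by apply: hP; rewrite !inE eqxx orbT.
  move: (hall a aN) (hall b bN); rewrite eT !mem_cat !inE !eqxx !orbT /= !orbF => /eqP -> /eqP ->.
  by rewrite eqxx.
split=> //.
apply: seq_nil_nomem => z; rewrite /T0 mem_filter => /andP[hv zt].
move: zt; rewrite mem_filter => /andP[zterm zG].
have zN := sub _ zG.
move: zterm hv; rewrite /is_term /term_val hlab /mlab /h.
case e: (lab F z) => [c|] //= _.
case: (eqVneq z t) => [_|zt]; first by rewrite oner_eq0.
move=> c0.
have : z \in T0' by rewrite mem_filter /term_val e c0 mem_filter /is_term e zN.
move=> zT; move: (hall z zN); rewrite mem_cat zT /=.
by rewrite (negbTE zt).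
Qed.


Lemma edge_nodes (F : tdd) u w : wf F -> edge F u w -> u \in nodes F.
Proof.
move=> hw [[-> _]|[p [x [lo [w0 [hi [w1 [pN e hh]]]]]]]]; first by case/wfE: hw.
have [loN hiN] := wf_closed hw pN e.
by case: hh => -[-> _].
Qed.

Lemma term_in_terms (F : tdd) u : u \in nodes F -> is_term (lab F) u -> u \in terms F.
Proof. by move=> uN ut; rewrite mem_filter ut uN. Qed.

Lemma term_val_mlab f l v : term_val (mlab f (fun _ c => c) l) v = term_val l v.
Proof. by rewrite /term_val /mlab; case: (l v). Qed.

Lemma RR2_term (F G : tdd) : wf F -> RR2 F G ->
  [/\ ~ bad G, (T0 F = [::] -> T0 G = [::]) & (size (nodes G) = size (nodes F) -> bad F)].
Proof.
move=> hw [t [ht happ eG]].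
have tN : t \in nodes F by apply: terms_nodes; rewrite ht mem_head.
have [ct et] : exists c, lab F t = Term I c by apply: terms_lab; rewrite ht mem_head.
pose f := (fun (u : nat) (w : C) => if w == 0 then (t, 0) else (u, w)).
set G' := map_edges _ F (nodes F) in eG happ.
have eG' : G' = map_edges f F (nodes F) by [].
clearbody G'; subst G'.
have hlab : forall v, lab G v = mlab f (fun _ c => c) (lab F) v.
  by move=> v; rewrite eG /= /mlab; case: (lab F v).
have sub : {subset nodes G <= nodes F}.
  by move=> z; rewrite eG /= mem_filter => /andP[].
have tterm : is_term (lab F) t by rewrite /is_term et.
have isG : forall v, is_term (lab G) v = is_term (lab F) v.
  by move=> v; rewrite /is_term hlab /mlab; case: (lab F v).
have hc := wf_closed hw.
split.
- move=> [u [he nt]].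
  have fc : forall u' w', (u, 0) = f u' w' -> False.
    move=> u' w'; rewrite /f; case: eqP => [_ [eu]|w0 [_ ew]].
      by move: nt; rewrite isG eu tterm.
    by apply: w0.
  case: (edge_map sub _ (fun v _ => hlab v) he) => [|er|[p [x [lo [w0 [hi [w1 [pN e hh]]]]]]]].
  + by rewrite eG /=; case: (f _ _).
  + exact: fc er.
  + by case: hh; apply: fc.
- move=> h0; apply: seq_nil_nomem => z.
  rewrite /T0 mem_filter => /andP[hv zt].
  have : z \in T0 F.
    move: zt; rewrite !mem_filter isG => /andP[zterm zG].
    by rewrite zterm (sub _ zG) !andbT; move: hv; rewrite /term_val hlab /mlab; case: (lab F z).
  by rewrite h0.
move=> es; apply: NNPP => nb.
have nbad : forall u w, edge F u w -> w = 0 -> u = t.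
  move=> u w he w0; subst w; have uN := edge_nodes hw he.
  case ut: (is_term (lab F) u).
    by have := term_in_terms uN ut; rewrite ht inE => /eqP.
  by exfalso; apply: nb; exists u; rewrite ut.
have fid : forall u w, edge F u w -> f u w = (u, w).
  move=> u w he; rewrite /f; case: eqP => // w0.
  by rewrite (nbad _ _ he w0) w0.
have agree : forall z, z \in nodes F -> lab F z = lab (map_edges f F (nodes F)) z.
  move=> z zN /=; case e: (lab F z) => [//|x lo w0 hi w1].
  rewrite !fid //; right; exists z, x, lo, w0, hi, w1; split=> //; by [left|right].
have hall : forall z, z \in nodes F -> reachable (map_edges f F (nodes F)) z.
  by apply: filter_eq_all; move: es; rewrite eG.
have rF : Defs.root F \in nodes F by case/wfE: hw.
have reachF : forall z, z \in nodes F -> reachable F z.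
  move=> z zN; move: (hall z zN); rewrite /reachable /=.
  rewrite fid; last by left.
  by rewrite /= -(reach_cong hc agree).
case: happ => [[u [he ut]]|[v [vN nr]]].
  by apply: ut; apply: (nbad _ _ he).
by move: (reachF v vN); rewrite (negbTE nr).
Qed.


Lemma step_class (F G : tdd) : Inv F -> step F G ->
 (size (nodes G) < size (nodes F))%N \/
 (size (nodes G) = size (nodes F) /\
   ((T0 F != [::] /\ T0 G = [::] /\ (bad G -> bad F)) \/
    (bad F /\ ~ bad G /\ (T0 F = [::] -> T0 G = [::])))).
Proof.
case=> hw ho hn hs; have [_ _ _ _ hle] := step_presw hw ho hs.
move: hle; rewrite leq_eqVlt => /orP[/eqP es|]; last by left.
right; split=> //.
case: hs => h.
- by have [b1 b2] := RR1_term hw h; left; have [? ?] := b2 es.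
- by have [b1 b2 b3] := RR2_term hw h; right; split; [apply: b3|].
- by have [_ _ _ _ lt] := RR3_pres hw ho h; rewrite es ltnn in lt.
- by have [_ _ _ _ lt] := RR4_pres hw ho h; rewrite es ltnn in lt.
Qed.

Definition Qt (F : tdd) := exists G, steps F G /\ irreducible G.

Lemma Qstep (F : tdd) : (forall G, step F G -> Qt G) -> Qt F.
Proof.
move=> h; case: (classic (exists G, step F G)) => [[G hs]|hn].
  by have [H [hsH hi]] := h G hs; exists H; split=> //; apply: steps_cons hs hsH.
by exists F; split=> //; apply: steps_refl.
Qed.

Lemma term_same m : (forall G, Inv G -> (size (nodes G) < m)%N -> Qt G) ->
  forall F, Inv F -> size (nodes F) = m -> Qt F.
Proof.
move=> H.
have L1 : forall F, Inv F -> size (nodes F) = m -> T0 F = [::] -> ~ bad F -> Qt F.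
  move=> F hF eF h0 hb; apply: Qstep => G hs; have [hG _] := step_inv hF hs.
  case: (step_class hF hs) => [lt|[es [[n0 _]|[b _]]]].
  - by apply: H => //; rewrite -eF.
  - by rewrite h0 in n0.
  - by case: hb.
have L2 : forall F, Inv F -> size (nodes F) = m -> ~ bad F -> Qt F.
  move=> F hF eF hb; apply: Qstep => G hs; have [hG _] := step_inv hF hs.
  case: (step_class hF hs) => [lt|[es [[_ [g0 gb]]|[b _]]]].
  - by apply: H => //; rewrite -eF.
  - by apply: L1 => //; [rewrite es | move/gb].
  - by case: hb.
have L3 : forall F, Inv F -> size (nodes F) = m -> T0 F = [::] -> Qt F.
  move=> F hF eF h0; apply: Qstep => G hs; have [hG _] := step_inv hF hs.
  case: (step_class hF hs) => [lt|[es [[n0 _]|[_ [gb _]]]]].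
  - by apply: H => //; rewrite -eF.
  - by rewrite h0 in n0.
  - by apply: L2 => //; rewrite es.
move=> F hF eF; apply: Qstep => G hs; have [hG _] := step_inv hF hs.
case: (step_class hF hs) => [lt|[es [[_ [g0 _]]|[_ [gb _]]]]].
- by apply: H => //; rewrite -eF.
- by apply: L3 => //; rewrite es.
- by apply: L2 => //; rewrite es.
Qed.

Lemma term_all n : forall F, (size (nodes F) < n)%N -> Inv F -> Qt F.
Proof.
elim: n => [|n IH] F // hs hF.
apply: (@term_same (size (nodes F))) => // G hG lt.
by apply: IH => //; apply: leq_trans lt hs.
Qed.

End Dev.

Theorem theorem5 (R : realType) (disp : Order.disp_t) (I : finOrderType disp)
    (F : tdd R I) :
  wf F -> ordered F -> normal_tdd F ->
  (* applying a reduction rule does not change the represented tensor *)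
  (forall G, step F G -> tensor_of G = tensor_of F) /\
  (* the reduction rules can be applied until none is applicable ... *)
  (exists G, steps F G /\ irreducible G) /\
  (* ... and doing so (in any order) yields the reduced TDD of phi *)
  (forall G, steps F G -> irreducible G ->
     [/\ wf G, ordered G, reduced G & tensor_of G = tensor_of F]).
Proof.
move=> hw ho hn.
have hF : Inv F by split.
split; first by move=> G hs; have [_ ->] := step_inv hF hs.
split; first exact: (@term_all _ _ _ (size (nodes F)).+1 F (ltnSn _) hF).
move=> G hs hi; have [[hwG hoG hnG] ht] := steps_inv hF hs.
by split=> //; apply: irr_reduced.
Qed.
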